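(* Let $K$ be any number field. There do not exist finite extensions $L/K$ and $M/K$ with $[L:K]=4$, $t_K(L)=1$ and $\tau_K(M,L)=2$.
   Context: Extensions lie in a fixed algebraic closure. For $L/K$ with Galois closure $\tilde L$, $G=\mathrm{Gal}(\tilde L/K)$, $H=\mathrm{Gal}(\tilde L/L)$, the ascending index is $t_K(L)=[G:H^G]$ where $H^G$ is the normal closure of $H$ in $G$ (the degree of the largest subextension of $L/K$ Galois over $K$). For $M/K$, if $L_1,\dots,L_a$ are all the distinct subfields of $M$ isomorphic to $L$ over $K$, then $\tau_K(M,L)=[L_1\cap\cdots\cap L_a:K]$ if $a\ge1$ and $\tau_K(M,L)=0$ if $a=0$. *)

(* Defs.v *)
From HB Require Import structures.
From mathcomp Require Import all_boot all_order all_algebra all_fingroup all_solvable all_field.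
Set Implicit Arguments. Unset Strict Implicit. Unset Printing Implicit Defensive.
Import GRing.Theory.

Section Defs.
Variable E : splittingFieldType rat.

(* Ascending index t_K(L) = [G : H^G], G = Gal(E/K), H = Gal(E/L),
   H^G = normal closure of H in G (E may replace the
   Galois closure of L/K without changing the index). *)
Definition ascending_index (K L : {subfield E}) : nat :=
  #|'Gal(fullv / K) : <<class_support 'Gal(fullv / L) 'Gal(fullv / K)>>|%g.

Definition iso_over (K L L' : {subfield E}) : Prop :=
  exists f : 'End(E), kHom K L f /\ (f @: L)%VS = L'.

Definition copy_in (K M L L' : {subfield E}) : Prop :=
  (L' <= M)%VS /\ iso_over K L L'.

Definition tau_is (K M L : {subfield E}) (d : nat) : Prop :=
  ((~ exists L', copy_in K M L L') /\ d = 0%N) \/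
  ((exists L', copy_in K M L L') /\
   exists I : {subfield E},
     (forall x : E, x \in I <-> (forall L', copy_in K M L L' -> x \in L')) /\
     d = \dim_K I).
End Defs.

(* Main.v *)
Require Import Defs.
From HB Require Import structures.
From mathcomp Require Import all_boot all_order all_algebra all_fingroup all_solvable all_field.
Import GRing.Theory.

Theorem mainTheorem19 (E : splittingFieldType rat) (K : {subfield E}) :
  ~ exists L M : {subfield E},
      [/\ (K <= L)%VS, (K <= M)%VS, \dim_K L = 4%N,
          ascending_index K L = 1%N & tau_is K M L 2].
Proof.
Local Open Scope group_scope.
move=> [L [M [sKL sKM dimL tL tau]]].
case: tau => [[_ //]|[[L0 [sL0M [f [fhom fL]]]] [I [HI dimI]]]].
have galE : galois K fullv.
  rewrite /galois subvf normalFieldf andbT; apply/separableP => y _.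
  apply: pcharf0_separable => p; rewrite (pchar_lalg E) (@Num.Theory.pchar_num rat) //.
have [s sG fs] := kHom_to_gal (K:=K) (M:=L) (E:=fullv)
   (introT andP (conj sKL (subvf L))) (normalFieldf K) fhom.
have eL0 : L0 = (s @: L)%VS :> {vspace E} by rewrite -fL; apply: eq_in_limg.
have sIL0 : (I <= L0)%VS.
  by apply/subvP => x /HI; apply; split => //; exists f.
have sKI : (K <= I)%VS.
  apply/subvP => x Kx; apply/HI => L' [_ [g [ghom <-]]].
  have [gK _] := kHomP_tmp ghom.
  by rewrite -(gK x Kx) memv_img // (subvP sKL).
have galI : galois I fullv by apply: galoisS galE; rewrite sKI subvf.
have sGIG : 'Gal(fullv / I) \subset 'Gal(fullv / K) by apply: galS.
have idx2 : #|'Gal(fullv / K) : 'Gal(fullv / I)|%g = 2%N.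
  have h1 := galois_dim galE.
  have h2 := galois_dim galI.
  have h3 := dim_sup_field (subvf I).
  have h4 := dim_sup_field sKI.
  have h5 := dim_sup_field (subvf K).
  have h6 := Lagrange sGIG.
  have h7 := adim_gt0 K.
  have h8 : 0 < #|'Gal(fullv / I)| by apply: cardG_gt0.
  rewrite -dimI in h4.
  have e1 : (#|'Gal(fullv / K)| * \dim K = #|'Gal(fullv / I)| * 2 * \dim K)%N.
    by rewrite -h1 -h2 -h5 -mulnA -h4 -h3.
  have e2 : (#|'Gal(fullv / K)| = #|'Gal(fullv / I)| * 2)%N.
    by apply/eqP; rewrite -(eqn_pmul2r h7) e1.
  by apply/eqP; rewrite -(eqn_pmul2l h8) h6 e2.
have nGI := index2_normal sGIG idx2.
have sHGI : 'Gal(fullv / L) \subset 'Gal(fullv / I).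
  rewrite -((normsP (normal_norm nGI)) _ (groupVr sG)) -sub_conjgV invgK.
  by rewrite gal_conjg -eL0; apply: galS.
have sCS : class_support 'Gal(fullv / L) 'Gal(fullv / K) \subset 'Gal(fullv / I).
  by apply: class_support_sub_norm => //; apply: normal_norm.
have sGG : 'Gal(fullv / K) \subset 'Gal(fullv / I).
  have sCG : <<class_support 'Gal(fullv / L) 'Gal(fullv / K)>> \subset 'Gal(fullv / K).
    by rewrite gen_subG class_support_subG // galS.
  have tL' : #|'Gal(fullv / K) : <<class_support 'Gal(fullv / L) 'Gal(fullv / K)>>| = 1%N := tL.
  have eqG := index1g sCG tL'.
  by rewrite -{1}eqG gen_subG.
by move: sGG; rewrite -indexg_eq1 idx2.
Qed.
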